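(* Let $\alpha\in\{0,1,2\}^*$ be a finite ternary string and let $c_\infty[\alpha]$ be the CQCA limit configuration on input $\alpha$. Let $e=(x_0,y_0)\in\mathbb{Z}^2$ be such that both cells $e+N$ and $e+W$ are defined in $c_\infty[\alpha]$ (an anchor cell). Then there exists $z\in\mathbb{N}$ such that: the cells $(x_0,y)$ with $y_0<y\le|\alpha|$ are all defined and give a base-$3'$ word $\gamma$ with $[\![\gamma]\!]_{3'}=z$; and the cells $(x,y_0)$ with $x<x_0$ all have defined sum bits $b_x$, only finitely many of which are $1$, with $\sum_{x<x_0}b_x\,2^{x_0-1-x}=z$ (i.e. the sum bits strictly west of $e$ on row $y_0$ form the base-2 representation of $z$, least significant bit at $e+W$).
   Context: Notation: $E=(1,0)$, $W=(-1,0)$, $N=(0,1)$, $S=(0,-1)$ in $\mathbb{Z}^2$; $[P]\in\{0,1\}$ equals $1$ iff $P$ holds. Strings are indexed from the right. Base $3'$: words over $\{0,\bar0,1,\bar1\}$ with trit values $0\mapsto0$, $\bar0\mapsto1$, $1\mapsto1$, $\bar1\mapsto2$, and $[\![\gamma]\!]_{3'}=\sum_i\mathrm{val}(\gamma_i)3^i$. The symbols $0,\bar0,1,\bar1$ are identified with the cell states $(0,0),(0,1),(1,0),(1,1)$. The encoding $\mathrm{enc}:\{0,1,2\}^*\to\{0,\bar0,1,\bar1\}^*$ acts symbol by symbol: $0\mapsto0$, $2\mapsto\bar1$, and a digit $\alpha_i=1$ maps to $1$ if there exists $j<i$ with $\alpha_j\ne1$ and the largest such $j$ has $\alpha_j=2$,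 and to $\bar0$ otherwise. A vertical contiguous segment of defined cells gives the base-$3'$ word formed by the cells' states read from north (most significant) to south (least significant). The CQCA. State set $\Sigma=\{0,1,\bot\}^2\setminus\{(\bot,0),(\bot,1)\}$; a state $(s,c)$ has sum bit $s$ and carry bit $c$; it is undefined if $(\bot,\bot)$, half-defined if $s\in\{0,1\},c=\bot$, defined if $s,c\in\{0,1\}$. One step $F(C)$ of a configuration $C:\mathbb{Z}^2\to\Sigma$: first the non-local rule gives $C'$: $C'(u)=(0,1)$ if $C(u+W)=(1,\bot)$, $C(u)\in\{(0,\bot),(\bot,\bot)\}$ and $C(u+iE)\in\{(0,\bot),(\bot,\bot)\}$ for all $i\ge1$; otherwise $C'(u)=C(u)$. Then the local rule on $C'$ at all cells simultaneously: (i) if $C'(u)=(s,\bot)$ half-defined and $C'(u+E)=(s',c')$ defined, $F(C)(u)=(s,[s+s'+c'\ge2])$; (ii) if $C'(u)=(\bot,\bot)$, $C'(u+N)=(s,\bot)$ half-defined and $C'(u+N+E)=(s',c')$ defined, $F(C)(u)=((s+s'+c')\bmod2,\bot)$; (iii) otherwise $F(C)(u)=C'(u)$. For $\alpha\in\{0,1,2\}^*$ with $\gamma=\mathrm{enc}(\alpha)$, the initial configuration $c_0[\alpha]$ is: $c_0[\alpha](0,i)=\gamma_{i-1}$ for $1\le i\le|\alpha|$, $c_0[\alpha](x,|\alpha|)=(0,\bot)$ for all $x<0$, and $(\bot,\bot)$ elsewhere. Each cell's state in $F^i(c_0[\alpha])$ is eventually constant; $c_\infty[\alpha]$ is the pointwise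 limit. *)

(* Defs.v *)
From Stdlib Require Import ZArith List Bool Arith Lia ClassicalEpsilon.
Import ListNotations.
Open Scope Z_scope.

Inductive trit : Type := T0 | T1 | T2.

(* A string alpha is a list written left to right (most significant first);
   strings are indexed from the right: alpha_i = nth (|alpha|-1-i). *)
Definition tstr := list trit.
Definition at_r {A} (d : A) (s : list A) (i : nat) : A :=
  nth (length s - 1 - i)%nat s d.

(* Undef = (bot,bot), Half s = (s,bot), Def s c = (s,c) *)
Inductive cell : Type :=
| Undef : cell
| Half : bool -> cell
| Def : bool -> bool -> cell.

Definition is_defined (s : cell) : Prop := exists b c, s = Def b c.

Definition sum_bit (s : cell) : option bool :=
  match s with Undef => None | Half b => Some b | Def b _ => Some b end.

(* symbols 0, bar0, 1, bar1 = (0,0),(0,1),(1,0),(1,1); trit value s + c *)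
Definition b2n (b : bool) : nat := if b then 1%nat else 0%nat.
Definition trit_val (s : cell) : nat :=
  match s with Def b c => (b2n b + b2n c)%nat | _ => 0%nat end.

Definition val3 (w : list cell) : nat :=
  fold_left (fun acc s => (3 * acc + trit_val s)%nat) w 0%nat.

Fixpoint last_non1 (a : tstr) (i : nat) : option trit :=
  match i with
  | O => None
  | S k => match at_r T0 a k with
           | T1 => last_non1 a k
           | t => Some t
           end
  end.

Definition enc_at (a : tstr) (i : nat) : cell :=
  match at_r T0 a i with
  | T0 => Def false false
  | T2 => Def true true
  | T1 => match last_non1 a i with
          | Some T2 => Def true false
          | _ => Def false true
          end
  end.

Definition config := Z * Z -> cell.
Definition addv (u v : Z * Z) : Z * Z := (fst u + fst v, snd u + snd v).
Definition vE : Z * Z := (1, 0).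
Definition vW : Z * Z := (-1, 0).
Definition vN : Z * Z := (0, 1).
Definition vS : Z * Z := (0, -1).

Definition zeroish (s : cell) : Prop := s = Half false \/ s = Undef.

Definition nonlocal_cond (C : config) (u : Z * Z) : Prop :=
  C (addv u vW) = Half true /\ zeroish (C u) /\
  forall i : Z, 1 <= i -> zeroish (C (addv u (i, 0))).

Definition nonlocal (C : config) : config := fun u =>
  if excluded_middle_informative (nonlocal_cond C u) then Def false true else C u.

Definition local (C' : config) : config := fun u =>
  match C' u with
  | Half s =>
      match C' (addv u vE) with
      | Def s' c' => Def s (2 <=? b2n s + b2n s' + b2n c')%nat
      | _ => C' u
      end
  | Undef =>
      match C' (addv u vN), C' (addv (addv u vN) vE) with
      | Half s, Def s' c' => Half (Nat.odd (b2n s + b2n s' + b2n c'))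
      | _, _ => C' u
      end
  | Def _ _ => C' u
  end.

Definition F (C : config) : config := local (nonlocal C).

Definition c0 (a : tstr) : config := fun u =>
  let n := Z.of_nat (length a) in
  let (x, y) := u in
  if (x =? 0) && (1 <=? y) && (y <=? n) then enc_at a (Z.to_nat (y - 1))
  else if (x <? 0) && (y =? n) then Half false
  else Undef.

Definition eventually_const (a : tstr) (u : Z * Z) (s : cell) : Prop :=
  exists n : nat, forall m : nat, (n <= m)%nat -> Nat.iter m F (c0 a) u = s.

(* c_infty[alpha]: the pointwise limit (each cell is eventually constant, as
   stated in the paper; Undef is a never-used default otherwise). *)
Definition c_inf (a : tstr) : config := fun u =>
  match excluded_middle_informative (exists s, eventually_const a u s) with
  | left H => proj1_sig (constructive_indefinite_description _ H)
  | right _ => Undef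
  end.

Definition column_word (C : config) (x0 y0 top : Z) : list cell :=
  map (fun k : nat => C (x0, top - Z.of_nat k)) (seq 0 (Z.to_nat (top - y0))).

Fixpoint sum_nat (f : nat -> nat) (K : nat) : nat :=
  match K with O => O | S k => (sum_nat f k + f k)%nat end.

(* Main.v *)
Require Import Defs.
From Stdlib Require Import ZArith List Arith Lia Classical ClassicalEpsilon.
Open Scope Z_scope.

Open Scope Z_scope.

Definition isDef (s : cell) : Prop := match s with Def _ _ => True | _ => False end.

Lemma addv_xy x y i j : addv (x,y) (i,j) = (x+i, y+j).
Proof. reflexivity. Qed.
Lemma aE x y : addv (x,y) vE = (x+1, y). Proof. unfold addv; simpl; f_equal; lia. Qed.
Lemma aW x y : addv (x,y) vW = (x-1, y). Proof. unfold addv; simpl; f_equal; lia. Qed.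
Lemma aN x y : addv (x,y) vN = (x, y+1). Proof. unfold addv; simpl; f_equal; lia. Qed.
Lemma aNE x y : addv (addv (x,y) vN) vE = (x+1, y+1). Proof. unfold addv; simpl; f_equal; lia. Qed.

Lemma nl_yes C u : nonlocal_cond C u -> nonlocal C u = Def false true.
Proof. intro H. unfold nonlocal. destruct excluded_middle_informative; tauto. Qed.
Lemma nl_no C u : ~ nonlocal_cond C u -> nonlocal C u = C u.
Proof. intro H. unfold nonlocal. destruct excluded_middle_informative; tauto. Qed.
Lemma nl_cases C u : nonlocal C u = C u \/ (nonlocal_cond C u /\ nonlocal C u = Def false true).
Proof. destruct (classic (nonlocal_cond C u)) as [H|H].
 right; split; auto; apply nl_yes; auto. left; apply nl_no; auto. Qed.

Lemma F_inv C u :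
  (nonlocal_cond C u /\ F C u = Def false true)
  \/ (~ nonlocal_cond C u /\ exists s s' c', C u = Half s /\ nonlocal C (addv u vE) = Def s' c'
        /\ F C u = Def s (2 <=? b2n s + b2n s' + b2n c')%nat)
  \/ (~ nonlocal_cond C u /\ C u = Undef /\ exists s s' c', nonlocal C (addv u vN) = Half s
        /\ nonlocal C (addv (addv u vN) vE) = Def s' c'
        /\ F C u = Half (Nat.odd (b2n s + b2n s' + b2n c')))
  \/ F C u = C u.
Proof.
  destruct (classic (nonlocal_cond C u)) as [H|H].
  - left. split; auto. unfold F, local. rewrite (nl_yes C u H). reflexivity.
  - unfold F, local. rewrite (nl_no C u H). destruct (C u) eqn:E.
    + destruct (nonlocal C (addv u vN)) eqn:E1; auto.
      destruct (nonlocal C (addv (addv u vN) vE)) eqn:E2; auto.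
      right; right; left. repeat split; auto. exists b, b0, b1. auto.
    + destruct (nonlocal C (addv u vE)) eqn:E1; auto.
      right; left. split; auto. exists b, b0, b1. auto.
    + auto.
Qed.

Lemma local_def N u b c : N u = Def b c -> local N u = Def b c.
Proof. intro H. unfold local. rewrite H. reflexivity. Qed.
Lemma F_def C u b c : C u = Def b c -> F C u = Def b c.
Proof. intro H. unfold F. apply local_def.
  destruct (nl_cases C u) as [E|[E1 E2]]. rewrite E; auto.
  destruct E1 as [_ [Z _]]. unfold zeroish in Z. rewrite H in Z. destruct Z; discriminate. Qed.
Lemma F_ndef_def C u b c : nonlocal C u = Def b c -> F C u = Def b c.
Proof. intro H. unfold F. apply local_def. auto. Qed.
Lemma nl_half C u s : nonlocal C u = Half s -> C u = Half s.
Proof. intro H. destruct (nl_cases C u) as [E|[_ E]]; congruence. Qed.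
Lemma nl_def C u b c : nonlocal C u = Def b c -> C u = Def b c \/ (nonlocal_cond C u /\ b = false /\ c = true).
Proof. intro H. destruct (nl_cases C u) as [E|[E1 E2]]. left; congruence. right. rewrite E2 in H. inversion H; auto. Qed.
Lemma nl_isdef C u : isDef (C u) -> isDef (nonlocal C u).
Proof. intro H. destruct (nl_cases C u) as [E|[E1 E2]]. rewrite E; auto. rewrite E2; exact I. Qed.
Lemma nl_undef C u : nonlocal C u = Undef -> C u = Undef.
Proof. intro H. destruct (nl_cases C u) as [E|[E1 E2]]; congruence. Qed.

Lemma local_half_def N u s s' c' : N u = Half s -> N (addv u vE) = Def s' c' ->
  local N u = Def s (2 <=? b2n s + b2n s' + b2n c')%nat.
Proof. intros H1 H2. unfold local. rewrite H1, H2. reflexivity. Qed.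
Lemma local_half_stay N u s : N u = Half s -> ~ isDef (N (addv u vE)) -> local N u = Half s.
Proof. intros H1 H2. unfold local. rewrite H1. destruct (N (addv u vE)); auto. exfalso; apply H2; exact I. Qed.

Lemma F_isdef C u : isDef (C u) -> isDef (F C u).
Proof. destruct (C u) eqn:E; simpl; try tauto. intros _. rewrite (F_def C u b b0 E). exact I. Qed.

Lemma ncond_W C u : nonlocal_cond C u -> C (addv u vW) = Half true.
Proof. intros [H _]; auto. Qed.
Lemma ncond_z C u : nonlocal_cond C u -> zeroish (C u).
Proof. intros [_ [H _]]; auto. Qed.
Lemma nl_def_keep C u b c : C u = Def b c -> nonlocal C u = Def b c.
Proof. intro H. rewrite nl_no; auto. intros [_ [Z _]]. rewrite H in Z. destruct Z; discriminate. Qed.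
Lemma nl_half_keep C u : C u = Half true -> nonlocal C u = Half true.
Proof. intro H. rewrite nl_no; auto. intros [_ [Z _]]. rewrite H in Z. destruct Z; discriminate. Qed.

Open Scope Z_scope.

Record Inv (n : Z) (C : config) : Prop := {
 j0 : forall x y, 1 <= x -> C (x,y) = Undef;
 j0' : forall y s, C (0,y) <> Half s;
 j3 : forall x y, n < y -> C (x,y) = Undef;
 j7 : forall x, x < 0 -> C (x,n) = Half false \/ exists c, C (x,n) = Def false c;
 j1 : forall x y, x <= 0 -> y < n -> C (x,y) <> Undef -> isDef (C (x,y+1));
 j2 : forall x y, x < 0 -> y < n -> C (x,y) <> Undef -> isDef (C (x+1,y+1));
 j5 : forall x y, x < 0 -> isDef (C (x,y+1)) -> ~ isDef (C (x+1,y+1)) -> C (x-1,y) <> Half true;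
 j6 : forall x y, x < 0 -> isDef (C (x,y)) -> ~ isDef (C (x+1,y)) -> isDef (C (x-1,y)) }.

Ltac fcase C x y :=
  let Hc := fresh "Hc" in let Hf := fresh "Hf" in let Hu := fresh "Hu" in
  let s := fresh "s" in let s' := fresh "s'" in let c' := fresh "c'" in
  let H1 := fresh "H1" in let H2 := fresh "H2" in
  destruct (F_inv C (x,y)) as [[Hc Hf]|[[Hc [s [s' [c' [H1 [H2 Hf]]]]]]|[[Hc [Hu [s [s' [c' [H1 [H2 Hf]]]]]]]|Hf]]];
  repeat (progress (rewrite ?aNE, ?aE, ?aN in *)).

Lemma ncW C x y : nonlocal_cond C (x,y) -> C (x-1,y) = Half true.
Proof. intro H. rewrite <- aW. apply ncond_W; auto. Qed.

Lemma isDef_dec s : isDef s \/ ~ isDef s.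
Proof. destruct s; simpl; tauto. Qed.

Lemma Inv_F n C : Inv n C -> Inv n (F C).
Proof.
  intros I. destruct I as [J0 J0' J3 J7 J1 J2 J5 J6]. constructor.
  - intros x y Hx. fcase C x y.
    + apply ncW in Hc. destruct (Z.eq_dec x 1) as [->|].
      * exfalso. replace (1-1) with 0 in Hc by lia. eapply J0'; eauto.
      * rewrite J0 in Hc by lia. discriminate.
    + rewrite J0 in H1 by lia. discriminate.
    + apply nl_half in H1. rewrite J0 in H1 by lia. discriminate.
    + rewrite Hf. auto.
  - intros y s0 H. fcase C 0 y; rewrite H in Hf; try discriminate.
    + apply nl_half in H1. eapply J0'; eauto.
    + eapply J0'; eauto.
  - intros x y Hy. fcase C x y.
    + apply ncW in Hc. rewrite J3 in Hc by lia. discriminate.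
    + rewrite J3 in H1 by lia. discriminate.
    + apply nl_half in H1. rewrite J3 in H1 by lia. discriminate.
    + rewrite Hf. auto.
  - intros x Hx. fcase C x n.
    + apply ncW in Hc. destruct (J7 (x-1)) as [E|[c E]]; try lia; congruence.
    + destruct (J7 x Hx) as [E|[c E]]; rewrite E in H1; try discriminate.
      inversion H1; subst. right; eauto.
    + destruct (J7 x Hx) as [E|[c E]]; congruence.
    + rewrite Hf; auto.
  - intros x y Hx Hy Hn. fcase C x y.
    + apply ncW in Hc. assert (D := J2 (x-1) y ltac:(lia) Hy ltac:(congruence)).
      replace (x-1+1) with x in D by lia. apply F_isdef; auto.
    + apply F_isdef, J1; auto; congruence.
    + unfold F. rewrite (local_half_def _ (x,y+1) s s' c'); simpl; auto; try (rewrite aE; auto).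
    + rewrite Hf in Hn. apply F_isdef, J1; auto.
  - intros x y Hx Hy Hn. fcase C x y.
    + apply ncW in Hc. assert (D := J2 (x-1) y ltac:(lia) Hy ltac:(congruence)).
      replace (x-1+1) with x in D by lia.
      destruct (isDef_dec (C (x+1,y+1))) as [D2|D2]. apply F_isdef; auto.
      exfalso. apply (J5 x y Hx D D2). auto.
    + apply F_isdef, J2; auto; congruence.
    + apply F_ndef_def in H2. rewrite H2. exact I.
    + rewrite Hf in Hn. apply F_isdef, J2; auto.
  - intros x y Hx HDf HND HD. fcase C (x-1) y.
    + rewrite Hf in HD; discriminate.
    + rewrite Hf in HD; discriminate.
    + replace (x-1+1) with x in * by lia.
      destruct (nl_def _ _ _ _ H2) as [E|[Ec [-> ->]]].
      * assert (ND : ~ isDef (C (x+1,y+1))) by (intro Q; apply HND, F_isdef; auto).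
        assert (Q := J6 x (y+1) Hx ltac:(rewrite E; exact I) ND).
        apply nl_half in H1. rewrite H1 in Q. exact Q.
      * apply ncW in Ec. apply nl_half in H1. rewrite H1 in Ec. inversion Ec; subst.
        rewrite Hf in HD. simpl in HD. discriminate.
    + rewrite Hf in HD. fcase C x (y+1).
      * apply ncW in Hc. destruct (Z_lt_le_dec y n).
        -- assert (Q := J1 (x-1) y ltac:(lia) l ltac:(congruence)). rewrite Hc in Q. exact Q.
        -- destruct (Z.eq_dec y n) as [->|].
           ++ destruct (J7 (x-1)) as [E|[c E]]; try lia; congruence.
           ++ rewrite J3 in HD by lia. discriminate.
      * apply HND. match goal with H: nonlocal C (x+1,y+1) = Def _ _ |- _ => rewrite (F_ndef_def _ _ _ _ H) end. exact I.
      * rewrite Hf0 in HDf. exact HDf.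
      * rewrite Hf0 in HDf. assert (ND : ~ isDef (C (x+1,y+1))) by (intro Q; apply HND, F_isdef; auto).
        exact (J5 x y Hx HDf ND HD).
  - intros x y Hx HD HND.
    assert (ND : ~ isDef (C (x+1,y))) by (intro Q; apply HND, F_isdef; auto).
    fcase C x y.
    + assert (Hn : nonlocal C (x,y) = Def false true) by (apply nl_yes; auto).
      apply ncW in Hc.
      assert (Hm : nonlocal C (x-1,y) = Half true).
      { rewrite nl_no; auto. intros [_ [Z _]]. rewrite Hc in Z. destruct Z; discriminate. }
      assert (He : nonlocal C (addv (x-1,y) vE) = Def false true).
      { rewrite aE. replace (x-1+1) with x by lia. auto. }
      unfold F. rewrite (local_half_def _ (x-1,y) true false true Hm He). exact I.
    + exfalso. apply HND. rewrite (F_ndef_def _ _ _ _ H2). exact I.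
    + rewrite Hf in HD. destruct HD.
    + rewrite Hf in HD. apply F_isdef, J6; auto.
Qed.

Open Scope Z_scope.

Lemma enc_def a i : isDef (enc_at a i).
Proof. unfold enc_at. destruct (at_r T0 a i); simpl; auto. destruct (last_non1 a i) as [[| |]|]; simpl; auto. Qed.

Lemma c0_cases a x y :
  (x = 0 /\ 1 <= y <= Z.of_nat (length a) /\ isDef (c0 a (x,y)))
  \/ (x < 0 /\ y = Z.of_nat (length a) /\ c0 a (x,y) = Half false)
  \/ (~ (x = 0 /\ 1 <= y <= Z.of_nat (length a)) /\ ~ (x < 0 /\ y = Z.of_nat (length a)) /\ c0 a (x,y) = Undef).
Proof.
  unfold c0. destruct (Z.eqb_spec x 0); destruct (Z.leb_spec 1 y); destruct (Z.leb_spec y (Z.of_nat (length a)));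
  destruct (Z.ltb_spec x 0); destruct (Z.eqb_spec y (Z.of_nat (length a))); simpl;
  try (left; repeat split; try lia; apply enc_def);
  try (right; left; repeat split; lia);
  right; right; repeat split; lia.
Qed.

Definition Ct (a : tstr) (t : nat) : config := Nat.iter t F (c0 a).

Lemma Inv_c0 a : Inv (Z.of_nat (length a)) (c0 a).
Proof.
  set (n := Z.of_nat (length a)).
  constructor.
  - intros x y Hx. destruct (c0_cases a x y) as [[? _]|[[? _]|[_ [_ E]]]]; auto; lia.
  - intros y s H. destruct (c0_cases a 0 y) as [[_ [_ D]]|[[? _]|[_ [_ E]]]]; try lia; rewrite H in *; try discriminate; destruct D.
  - intros x y Hy. destruct (c0_cases a x y) as [[_ [? _]]|[[_ [? _]]|[_ [_ E]]]]; auto; lia.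
  - intros x Hx. destruct (c0_cases a x n) as [[? _]|[[_ [_ E]]|[_ [H _]]]]; auto; lia.
  - intros x y Hx Hy Hn. destruct (c0_cases a x y) as [[-> [? D]]|[[_ [? _]]|[_ [_ E]]]]; try lia; try congruence.
    destruct (c0_cases a 0 (y+1)) as [[_ [_ D2]]|[[? _]|[H9 _]]]; auto; lia.
  - intros x y Hx Hy Hn. destruct (c0_cases a x y) as [[? _]|[[_ [? _]]|[_ [_ E]]]]; try lia; congruence.
  - intros x y Hx HD. destruct (c0_cases a x (y+1)) as [[? _]|[[_ [_ E]]|[_ [_ E]]]]; try lia; rewrite E in HD; destruct HD.
  - intros x y Hx HD. destruct (c0_cases a x y) as [[? _]|[[_ [_ E]]|[_ [_ E]]]]; try lia; rewrite E in HD; destruct HD.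
Qed.

Lemma Inv_Ct a t : Inv (Z.of_nat (length a)) (Ct a t).
Proof. induction t. apply Inv_c0. unfold Ct; simpl. apply Inv_F. exact IHt. Qed.

Lemma Ct_S a t : Ct a (S t) = F (Ct a t).
Proof. reflexivity. Qed.

Definition le_cell (s1 s2 : cell) : Prop :=
  match s1 with Undef => True | Half b => s2 = Half b \/ exists c, s2 = Def b c | Def b c => s2 = Def b c end.

Lemma le_refl s : le_cell s s. Proof. destruct s; simpl; auto. Qed.
Lemma le_trans s1 s2 s3 : le_cell s1 s2 -> le_cell s2 s3 -> le_cell s1 s3.
Proof. destruct s1 as [|b|b c]; simpl; intros H1 H2; auto.
  - destruct H1 as [->|[c ->]]; simpl in H2; auto. right; exists c; auto.
  - subst. simpl in H2. auto. Qed.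

Lemma F_mono C u : le_cell (C u) (F C u).
Proof.
  destruct (F_inv C u) as [[Hc Hf]|[[Hc [s [s' [c' [H1 [H2 Hf]]]]]]|[[Hc [Hu _]]|Hf]]].
  - apply ncond_z in Hc. destruct Hc as [E|E]; rewrite E, Hf; simpl; eauto.
  - rewrite H1, Hf; simpl; eauto.
  - rewrite Hu; simpl; auto.
  - rewrite Hf; apply le_refl.
Qed.

Lemma Ct_mono a t t' u : (t <= t')%nat -> le_cell (Ct a t u) (Ct a t' u).
Proof. intro H. induction H. apply le_refl. eapply le_trans; eauto. rewrite Ct_S. apply F_mono. Qed.

Lemma ev_const a u : exists N s, forall m, (N <= m)%nat -> Ct a m u = s.
Proof.
  destruct (classic (exists t, isDef (Ct a t u))) as [[t Ht]|Hn].
  - destruct (Ct a t u) eqn:E; try destruct Ht.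
    exists t, (Def b b0). intros m Hm. assert (Q := Ct_mono a t m u Hm). rewrite E in Q. exact Q.
  - destruct (classic (exists t b, Ct a t u = Half b)) as [[t [b Ht]]|Hn2].
    + exists t, (Half b). intros m Hm. assert (Q := Ct_mono a t m u Hm). rewrite Ht in Q.
      destruct Q as [Q|[c Q]]; auto. exfalso; apply Hn; exists m; rewrite Q; exact I.
    + exists 0%nat, Undef. intros m _. destruct (Ct a m u) eqn:E; auto.
      * exfalso; apply Hn2; eauto.
      * exfalso; apply Hn; exists m; rewrite E; exact I.
Qed.

Lemma cinf_spec a u : exists N, forall m, (N <= m)%nat -> Ct a m u = c_inf a u.
Proof.
  unfold c_inf. destruct excluded_middle_informative as [H|H].
  - destruct (constructive_indefinite_description _ H) as [s [N HN]]. simpl. exists N. exact HN.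
  - exfalso. apply H. destruct (ev_const a u) as [N [s HN]]. exists s, N. exact HN.
Qed.

Lemma le_L a t u : le_cell (Ct a t u) (c_inf a u).
Proof. destruct (cinf_spec a u) as [N HN]. rewrite <- (HN (max t N)) by lia. apply Ct_mono. lia. Qed.

Lemma L_at a u v : exists N, forall m, (N <= m)%nat -> Ct a m u = c_inf a u /\ Ct a m v = c_inf a v.
Proof. destruct (cinf_spec a u) as [N1 H1]. destruct (cinf_spec a v) as [N2 H2].
  exists (max N1 N2). intros m Hm. split; [apply H1|apply H2]; lia. Qed.

Lemma def_L a t u : isDef (Ct a t u) -> c_inf a u = Ct a t u.
Proof. intro H. assert (Q := le_L a t u). destruct (Ct a t u); try destruct H. simpl in Q. auto. Qed.

Lemma half_L a t u b : Ct a t u = Half b -> sum_bit (c_inf a u) = Some b.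
Proof. intro H. assert (Q := le_L a t u). rewrite H in Q. destruct Q as [->|[c ->]]; reflexivity. Qed.

Lemma nundef_L a t u : Ct a t u <> Undef -> c_inf a u <> Undef.
Proof. intros H E. assert (Q := le_L a t u). rewrite E in Q. destruct (Ct a t u); simpl in Q; try congruence;
  destruct Q as [Q|[c Q]]; discriminate. Qed.

Notation L a := (c_inf a).
Notation nn a := (Z.of_nat (length a)).

Lemma L_j0 a x y : 1 <= x -> L a (x,y) = Undef.
Proof. intro H. destruct (cinf_spec a (x,y)) as [N HN]. rewrite <- (HN N) by lia. apply (j0 _ _ (Inv_Ct a N)); auto. Qed.
Lemma L_j3 a x y : nn a < y -> L a (x,y) = Undef.
Proof. intro H. destruct (cinf_spec a (x,y)) as [N HN]. rewrite <- (HN N) by lia. apply (j3 _ _ (Inv_Ct a N)); auto. Qed.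
Lemma L_j1 a x y : x <= 0 -> y < nn a -> L a (x,y) <> Undef -> isDef (L a (x,y+1)).
Proof. intros H1 H2 H3. destruct (L_at a (x,y) (x,y+1)) as [N HN]. destruct (HN N (le_n _)) as [E1 E2].
  rewrite <- E2. apply (j1 _ _ (Inv_Ct a N)); auto. rewrite E1; auto. Qed.
Lemma L_row_n a x : x < 0 -> L a (x,nn a) <> Undef /\ sum_bit (L a (x,nn a)) = Some false.
Proof. intro H. destruct (cinf_spec a (x,nn a)) as [N HN]. rewrite <- (HN N) by lia.
  destruct (j7 _ _ (Inv_Ct a N) x H) as [E|[c E]]; rewrite E; split; auto; discriminate. Qed.

Lemma L_P1 a x y s : L a (x,y) = Half s -> ~ isDef (L a (x+1,y)).
Proof.
  intros H HD. destruct (L_at a (x,y) (x+1,y)) as [N HN].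
  destruct (HN N (le_n _)) as [E1 E2]. destruct (HN (S N) (le_S _ _ (le_n _))) as [E3 _].
  rewrite Ct_S in E3. set (C := Ct a N) in *.
  destruct (classic (nonlocal_cond C (x,y))) as [Hc|Hc].
  - unfold F in E3. rewrite (local_def _ _ false true (nl_yes _ _ Hc)) in E3. congruence.
  - rewrite <- E2 in HD. destruct (C (x+1,y)) eqn:E4; try destruct HD.
    assert (Q : nonlocal C (addv (x,y) vE) = Def b b0) by (rewrite aE; apply nl_def_keep; auto).
    assert (Q2 : nonlocal C (x,y) = Half s) by (rewrite nl_no; auto; congruence).
    unfold F in E3. rewrite (local_half_def _ (x,y) s _ _ Q2 Q) in E3. congruence.
Qed.

Open Scope Z_scope.

Lemma first_time (P : nat -> Prop) N : ~ P 0%nat -> P N -> exists t, ~ P t /\ P (S t).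
Proof. intros H0. induction N; intro HN. contradiction.
  destruct (classic (P N)); eauto. Qed.

Lemma local_undef N u s s' c' : N u = Undef -> N (addv u vN) = Half s ->
  N (addv (addv u vN) vE) = Def s' c' -> local N u = Half (Nat.odd (b2n s + b2n s' + b2n c')).
Proof. intros H1 H2 H3. unfold local. rewrite H1, H2, H3. reflexivity. Qed.

Definition R (a : tstr) (x y : Z) : Prop :=
  exists s c s' c', L a (x,y) = Def s c /\ L a (x+1,y) = Def s' c'
   /\ c = (2 <=? b2n s + b2n s' + b2n c')%nat
   /\ sum_bit (L a (x,y-1)) = Some (Nat.odd (b2n s + b2n s' + b2n c'))
   /\ (forall t, isDef (Ct a t (x,y)) -> Ct a t (x,y-1) <> Undef).

Lemma creation a x y : x < 0 -> y <= nn a -> isDef (L a (x,y)) ->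
  R a x y \/ exists t, nonlocal_cond (Ct a t) (x,y).
Proof.
  intros Hx Hy HD. destruct (cinf_spec a (x,y)) as [N HN].
  assert (HDN : isDef (Ct a N (x,y))) by (rewrite HN; auto).
  assert (H0 : ~ isDef (Ct a 0 (x,y))).
  { change (Ct a 0 (x,y)) with (c0 a (x,y)). destruct (c0_cases a x y) as [[? _]|[[_ [_ E]]|[_ [_ E]]]]; try lia; rewrite E; simpl; auto. }
  destruct (first_time (fun t => isDef (Ct a t (x,y))) N H0 HDN) as [t [Ht1 Ht2]].
  assert (Iv := Inv_Ct a t). set (C := Ct a t) in *. rewrite Ct_S in Ht2. fold C in Ht2.
  fcase C x y.
  - right; exists t; auto.
  - left. exists s, (2 <=? b2n s + b2n s' + b2n c')%nat, s', c'.
    assert (Cu : C (x,y-1) = Undef).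
    { destruct (classic (C (x,y-1) = Undef)) as [E|E]; auto.
      assert (Q := j1 _ _ Iv x (y-1) ltac:(lia) ltac:(lia) E). replace (y-1+1) with y in Q by lia.
      rewrite H1 in Q. destruct Q. }
    assert (Nc : ~ nonlocal_cond C (x,y-1)).
    { intro Q. apply ncW in Q. assert (Q2 := j2 _ _ Iv (x-1) (y-1) ltac:(lia) ltac:(lia) ltac:(congruence)).
      replace (x-1+1) with x in Q2 by lia. replace (y-1+1) with y in Q2 by lia. rewrite H1 in Q2. destruct Q2. }
    assert (Fb : F C (x,y-1) = Half (Nat.odd (b2n s + b2n s' + b2n c'))).
    { unfold F. apply local_undef.
      - rewrite nl_no; auto.
      - rewrite aN. replace (y-1+1) with y by lia. rewrite nl_no; auto.
      - rewrite aNE. replace (y-1+1) with y by lia. auto. }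
    repeat split.
    + rewrite (def_L a (S t) (x,y)); rewrite Ct_S; fold C; rewrite Hf; auto. exact I.
    + rewrite (def_L a (S t) (x+1,y)); rewrite Ct_S; fold C; rewrite (F_ndef_def _ _ _ _ H2); auto. exact I.
    + apply (half_L a (S t)). rewrite Ct_S. fold C. exact Fb.
    + intros t' Ht'. destruct (le_lt_dec t' t) as [Hle|Hlt].
      * exfalso. assert (Q := Ct_mono a t' t (x,y) Hle). fold C in Q. rewrite H1 in Q.
        destruct (Ct a t' (x,y)); simpl in *; try discriminate; auto.
      * assert (Q := Ct_mono a (S t) t' (x,y-1) Hlt). rewrite Ct_S in Q. fold C in Q. rewrite Fb in Q.
        intro E. rewrite E in Q. destruct Q as [Q|[? Q]]; discriminate.
  - rewrite Hf in Ht2. destruct Ht2.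
  - rewrite Hf in Ht2. contradiction.
Qed.

Lemma keepW a t m u : (Ct a t u = Half false \/ isDef (Ct a t u)) -> Ct a (t+m) u <> Half true.
Proof. intros H E. assert (Q := Ct_mono a t (t+m) u ltac:(lia)). rewrite E in Q.
  destruct H as [H|H]. rewrite H in Q. destruct Q as [Q|[? Q]]; discriminate.
  destruct (Ct a t u); try destruct H. simpl in Q. discriminate. Qed.

Lemma zero_stay a d : forall z y t, Z.to_nat (1 - z) = d -> y < nn a ->
  (Ct a t (z-1,y) = Half false \/ isDef (Ct a t (z-1,y))) ->
  (forall i, 0 <= i -> zeroish (Ct a t (z+i,y))) -> forall m, zeroish (Ct a (t+m) (z,y)).
Proof.
  induction d as [|d IH]; intros z y t Hd Hy HW HE m.
  all: destruct (Z_le_gt_dec 1 z) as [Hz|Hz];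
    [ right; apply (j0 _ _ (Inv_Ct a (t+m))); auto | ].
  all: assert (H0 := HE 0 ltac:(lia)); rewrite Z.add_0_r in H0.
  - lia.
  - destruct H0 as [H0|H0].
    +
      assert (IHz : forall m, zeroish (Ct a (t+m) (z+1,y))).
      { apply IH; auto. lia. left. replace (z+1-1) with z by lia. auto.
        intros i Hi. replace (z+1+i) with (z+(i+1)) by lia. apply HE. lia. }
      left. induction m as [|m IHm]. rewrite Nat.add_0_r; auto.
      rewrite Nat.add_succ_r, Ct_S. set (C := Ct a (t+m)) in *.
      fcase C z y.
      * apply ncW in Hc. exfalso. exact (keepW a t m _ HW Hc).
      * exfalso. destruct (nl_def _ _ _ _ H2) as [E|[Q _]].
        -- destruct (IHz m) as [E2|E2]; fold C in E2; congruence.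
        -- apply ncW in Q. replace (z+1-1) with z in Q by lia. congruence.
      * congruence.
      * rewrite Hf; auto.
    +
      right. induction m as [|m IHm]. rewrite Nat.add_0_r; auto.
      rewrite Nat.add_succ_r, Ct_S. set (C := Ct a (t+m)) in *.
      assert (Iv := Inv_Ct a (t+m)). fold C in Iv.
      fcase C z y.
      * apply ncW in Hc. exfalso. exact (keepW a t m _ HW Hc).
      * congruence.
      * apply nl_half in H1. exfalso. destruct (Z.eq_dec z 0) as [->|Hz0].
        -- eapply (j0' _ _ Iv); eauto.
        -- assert (Q := j2 _ _ (Inv_Ct a t) (z-1) y ltac:(lia) Hy
              ltac:(destruct HW as [HW|HW]; [congruence| destruct (Ct a t (z-1,y)); try destruct HW; discriminate])).
           replace (z-1+1) with z in Q by lia.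
           assert (Q2 := Ct_mono a t (t+m) (z,y+1) ltac:(lia)). fold C in Q2. rewrite H1 in Q2.
           destruct (Ct a t (z,y+1)); try destruct Q; simpl in Q2; discriminate.
      * rewrite Hf; auto.
Qed.

Open Scope nat_scope.

Definition wsum (f : nat -> nat) (K : nat) : nat := sum_nat (fun k => f k * 2 ^ k) K.

Lemma wsum_S f K : wsum f (S K) = wsum f K + f K * 2 ^ K.
Proof. reflexivity. Qed.

Lemma horner (f g c e : nat -> nat) K :
  (forall k, f k + e k = 2 * c k + g k) -> (forall k, e (S k) = f k + c k) ->
  f K = 0 -> c K = 0 -> wsum g (S K) = 3 * wsum f (S K) + e 0.
Proof.
  intros H1 H2 Hf Hc.
  assert (A : forall K, wsum g K + 2 * wsum c K = wsum f K + wsum e K).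
  { induction K0. reflexivity. rewrite !wsum_S.
    assert (Q := H1 K0). assert (Q2 : (f K0 + e K0) * 2 ^ K0 = (2 * c K0 + g K0) * 2 ^ K0) by (rewrite Q; auto).
    rewrite !Nat.mul_add_distr_r in Q2. nia. }
  assert (B : forall K, wsum e (S K) = e 0 + 2 * wsum f K + 2 * wsum c K).
  { induction K0. unfold wsum; simpl; lia. rewrite wsum_S, IHK0, !wsum_S, H2. rewrite Nat.pow_succ_r'. ring. }
  assert (AS := A (S K)). rewrite B in AS. rewrite !wsum_S, Hf, Hc in *. lia.
Qed.

Lemma wsum0 f K : (forall k, f k = 0) -> wsum f K = 0.
Proof. intro H. induction K. reflexivity. rewrite wsum_S, IHK, H. lia. Qed.

Fixpoint Vf (E : nat -> nat -> nat) (j : nat) : nat :=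
  match j with O => 0 | S j' => 3 * Vf E j' + E j' 0 end.

Lemma arith_core (SB CB E : nat -> nat -> nat) (J : nat) :
  (forall j k, j < J -> SB j k + E j k = 2 * CB j k + SB (S j) k) ->
  (forall j k, j < J -> E j (S k) = SB j k + CB j k) ->
  (forall j k, SB j k <= 1) -> (forall j k, CB j k <= 1) ->
  (forall k, SB 0 k = 0) ->
  (forall k, 2 * J + 1 <= k -> SB J k = 0) /\
  wsum (SB J) (S (2 * J + 1)) = Vf E J.
Proof.
  intros F1 F2 F3 F4 F5.
  assert (Zr : forall j, j <= J -> forall k, 1 + 2 * j <= k -> SB j k = 0 /\ (j < J -> CB j k = 0)).
  { induction j as [|j IH]; intros Hj k Hk.
    - split. apply F5. intro HJ. assert (Q := F1 0 k HJ). destruct k. lia.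
      rewrite F2 in Q by auto. rewrite F5, F5 in Q. specialize (F4 0 k). lia.
    - assert (S0 : forall k', 2 + 2 * j <= k' -> SB (S j) k' = 0).
      { intros k' Hk'. assert (Q := F1 j k' ltac:(lia)). destruct k'. lia.
        rewrite F2 in Q by lia. destruct (IH ltac:(lia) k' ltac:(lia)) as [A1 A2].
        destruct (IH ltac:(lia) (S k') ltac:(lia)) as [A3 A4]. rewrite A1, A2, A3 in Q by lia. lia. }
      split. apply S0. lia. intro HJ. assert (Q := F1 (S j) k HJ). destruct k. lia.
      rewrite F2 in Q by auto. rewrite (S0 (S k)), (S0 k) in Q by lia. specialize (F4 (S j) k). lia. }
  split. intros k Hk. apply (Zr J); lia.
  assert (forall j, j <= J -> wsum (SB j) (S (2 * J + 1)) = Vf E j).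
  { induction j as [|j IH]; intro Hj.
    - change (Vf E 0) with 0. apply wsum0. exact F5.
    - simpl. rewrite <- IH by lia.
      apply (horner (SB j) (SB (S j)) (CB j) (E j)).
      + intro k. apply F1. lia.
      + intro k. apply F2. lia.
      + apply (Zr j); lia.
      + apply (Zr j); lia. }
  apply H. lia.
Qed.

Open Scope Z_scope.

Lemma isd s : is_defined s -> isDef s.
Proof. intros [b [c ->]]. exact I. Qed.
Lemma isd' s : isDef s -> is_defined s.
Proof. destruct s; simpl; try tauto. intros _. exists b, b0. reflexivity. Qed.

Lemma sum_nat_ext f g K : (forall k, f k = g k) -> sum_nat f K = sum_nat g K.
Proof. intro H. induction K; simpl; auto. Qed.

Lemma row_step a x0 y0 y : x0 <= 0 -> y0 < y <= nn a ->
  (forall y', y0 < y' <= nn a -> isDef (L a (x0,y'))) ->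
  (forall x, x < x0 -> L a (x,y) <> Undef) ->
  (y < nn a -> forall x t, x < x0 -> isDef (Ct a t (x,y+1)) -> Ct a t (x,y) <> Undef) ->
  forall x, x < x0 -> R a x y.
Proof.
  intros Hx0 Hy Col NU TM.
  assert (D : forall j : nat, isDef (L a (x0 - Z.of_nat j, y))).
  { induction j. rewrite Z.sub_0_r. apply Col; lia.
    assert (Q := NU (x0 - Z.of_nat (S j)) ltac:(lia)).
    destruct (L a (x0 - Z.of_nat (S j), y)) eqn:E; try congruence.
    - exfalso. apply (L_P1 a _ _ _ E). replace (x0 - Z.of_nat (S j) + 1) with (x0 - Z.of_nat j) by lia. auto.
    - exact I. }
  assert (D' : forall x, x <= x0 -> isDef (L a (x,y))).
  { intros x Hx. replace x with (x0 - Z.of_nat (Z.to_nat (x0 - x))) by lia. apply D. }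
  intros x Hx.
  destruct (creation a x y ltac:(lia) ltac:(lia) (D' x ltac:(lia))) as [HR|[t Hc]]; auto.
  exfalso. assert (Iv := Inv_Ct a t). set (C := Ct a t) in *.
  assert (HWt := ncW _ _ _ Hc).
  destruct (Z.eq_dec y (nn a)) as [Eq|Ne].
  - rewrite Eq in HWt. destruct (j7 _ _ Iv (x-1) ltac:(lia)) as [E|[c E]]; congruence.
  - assert (Q := j2 _ _ Iv (x-1) y ltac:(lia) ltac:(lia) ltac:(congruence)).
    replace (x-1+1) with x in Q by lia.
    assert (Q2 := TM ltac:(lia) x t Hx Q). fold C in Q2.
    assert (Hz := ncond_z _ _ Hc). destruct Hz as [Hz|Hz]; [|contradiction].
    assert (ZS := zero_stay a (Z.to_nat (1 - (x+1))) (x+1) y t eq_refl ltac:(lia)).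
    destruct (cinf_spec a (x+1,y)) as [N HN].
    assert (Z2 : zeroish (Ct a (t+N) (x+1,y))).
    { apply ZS.
      - left. replace (x+1-1) with x by lia. exact Hz.
      - intros i Hi. destruct Hc as [_ [_ Hc3]]. assert (Q3 := Hc3 (i+1) ltac:(lia)).
        replace (addv (x,y) (i+1,0)) with (x+1+i,y) in Q3 by (unfold addv; simpl; f_equal; lia). exact Q3. }
    rewrite HN in Z2 by lia. assert (Q4 := D' (x+1) ltac:(lia)).
    destruct Z2 as [Z2|Z2]; rewrite Z2 in Q4; exact Q4.
Qed.

Theorem mainTheorem4 (a : tstr) (x0 y0 : Z) :
  is_defined (c_inf a (addv (x0, y0) vN)) ->
  is_defined (c_inf a (addv (x0, y0) vW)) ->
  exists z : nat,
    (forall y : Z, y0 < y <= Z.of_nat (length a) -> is_defined (c_inf a (x0, y))) /\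
    val3 (column_word (c_inf a) x0 y0 (Z.of_nat (length a))) = z /\
    exists (b : Z -> bool) (K : nat),
      (forall x : Z, x < x0 -> sum_bit (c_inf a (x, y0)) = Some (b x)) /\
      (forall k : nat, (K <= k)%nat -> b (x0 - 1 - Z.of_nat k) = false) /\
      sum_nat (fun k => b2n (b (x0 - 1 - Z.of_nat k)%Z) * 2 ^ k)%nat K = z.
Proof.
  intros HN HW. rewrite aN in HN. rewrite aW in HW. apply isd in HN. apply isd in HW.
  assert (Hx0 : x0 <= 0).
  { destruct (Z_le_gt_dec x0 0); auto. rewrite L_j0 in HN by lia. destruct HN. }
  assert (Hy0 : y0 + 1 <= nn a).
  { destruct (Z_le_gt_dec (y0+1) (nn a)); auto. rewrite L_j3 in HN by lia. destruct HN. }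
  assert (Col : forall y, y0 < y <= nn a -> isDef (L a (x0,y))).
  { assert (forall k : nat, y0 + 1 + Z.of_nat k <= nn a -> isDef (L a (x0, y0 + 1 + Z.of_nat k))).
    { induction k; intro Hk. rewrite Z.add_0_r; auto.
      assert (Q := L_j1 a x0 (y0 + 1 + Z.of_nat k) Hx0 ltac:(lia)
                    ltac:(intro E; rewrite E in IHk; apply IHk; lia)).
      replace (y0 + 1 + Z.of_nat (S k)) with (y0 + 1 + Z.of_nat k + 1) by lia. exact Q. }
    intros y Hy. replace y with (y0 + 1 + Z.of_nat (Z.to_nat (y - y0 - 1))) by lia. apply H. lia. }
  assert (Rows : forall j : nat, y0 < nn a - Z.of_nat j -> forall x, x < x0 -> R a x (nn a - Z.of_nat j)).
  { induction j as [|j IH]; intro Hj.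
    - apply row_step with y0; auto; try lia.
      + intros x Hx. rewrite Z.sub_0_r. apply (proj1 (L_row_n a x ltac:(lia))).
    - assert (Rp := IH ltac:(lia)).
      apply row_step with y0; auto; try lia.
      + intros x Hx. destruct (Rp x Hx) as [s [c [s' [c' [_ [_ [_ [E4 _]]]]]]]].
        replace (nn a - Z.of_nat j - 1) with (nn a - Z.of_nat (S j)) in E4 by lia.
        intro E. rewrite E in E4. discriminate.
      + intros _ x t Hx HD. destruct (Rp x Hx) as [s [c [s' [c' [_ [_ [_ [_ E5]]]]]]]].
        replace (nn a - Z.of_nat (S j) + 1) with (nn a - Z.of_nat j) in HD by lia.
        assert (Q := E5 t HD). replace (nn a - Z.of_nat j - 1) with (nn a - Z.of_nat (S j)) in Q by lia. exact Q. }
  set (J := Z.to_nat (nn a - y0)).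
  set (SB := fun (j k : nat) => match sum_bit (L a (x0 - 1 - Z.of_nat k, nn a - Z.of_nat j)) with Some b => b2n b | None => 0%nat end).
  set (CB := fun (j k : nat) => match L a (x0 - 1 - Z.of_nat k, nn a - Z.of_nat j) with Def _ c => b2n c | _ => 0%nat end).
  set (E := fun (j k : nat) => trit_val (L a (x0 - Z.of_nat k, nn a - Z.of_nat j))).
  assert (F1 : forall j k, (j < J)%nat -> (SB j k + E j k = 2 * CB j k + SB (S j) k)%nat).
  { intros j k Hj. destruct (Rows j ltac:(lia) (x0 - 1 - Z.of_nat k) ltac:(lia)) as [s [c [s' [c' [E1 [E2 [E3 [E4 _]]]]]]]].
    unfold SB, CB, E. rewrite E1.
    replace (x0 - Z.of_nat k) with (x0 - 1 - Z.of_nat k + 1) by lia. rewrite E2.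
    replace (nn a - Z.of_nat (S j)) with (nn a - Z.of_nat j - 1) by lia. rewrite E4. subst c.
    simpl. destruct s, s', c'; reflexivity. }
  assert (F2 : forall j k, (j < J)%nat -> E j (S k) = (SB j k + CB j k)%nat).
  { intros j k Hj. destruct (Rows j ltac:(lia) (x0 - 1 - Z.of_nat k) ltac:(lia)) as [s [c [s' [c' [E1 _]]]]].
    unfold SB, CB, E. replace (x0 - Z.of_nat (S k)) with (x0 - 1 - Z.of_nat k) by lia. rewrite E1. reflexivity. }
  assert (F3 : forall j k, (SB j k <= 1)%nat).
  { intros j k. unfold SB. destruct (sum_bit _) as [[]|]; simpl; lia. }
  assert (F4 : forall j k, (CB j k <= 1)%nat).
  { intros j k. unfold CB. destruct (c_inf a (x0 - 1 - Z.of_nat k, nn a - Z.of_nat j)) as [|?|? []]; simpl; lia. }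
  assert (F5 : forall k, SB 0%nat k = 0%nat).
  { intro k. unfold SB. rewrite Z.sub_0_r. rewrite (proj2 (L_row_n a (x0 - 1 - Z.of_nat k) ltac:(lia))). reflexivity. }
  destruct (arith_core SB CB E J F1 F2 F3 F4 F5) as [A1 A2].
  assert (HJ : nn a - Z.of_nat J = y0) by lia.
  assert (Bot : forall x, x < x0 -> exists bb, sum_bit (L a (x,y0)) = Some bb).
  { intros x Hx. assert (Q : (0 < J)%nat) by lia. destruct J as [|J'] eqn:EJ; [lia|].
    destruct (Rows J' ltac:(lia) x Hx) as [s [c [s' [c' [_ [_ [_ [E4 _]]]]]]]].
    replace (nn a - Z.of_nat J' - 1) with y0 in E4 by lia. eauto. }
  exists (Vf E J). split; [|split].
  - intros y Hy. apply isd', Col. lia.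
  - unfold column_word. fold J.
    assert (forall j, val3 (map (fun k : nat => L a (x0, nn a - Z.of_nat k)) (seq 0 j)) = Vf E j).
    { induction j. reflexivity. rewrite seq_S, map_app. unfold val3 in *. rewrite fold_left_app, IHj.
      simpl. unfold E. rewrite Z.sub_0_r. reflexivity. }
    apply H.
  - exists (fun x => match sum_bit (L a (x,y0)) with Some b => b | None => false end), (S (2 * J + 1)).
    split; [|split].
    + intros x Hx. destruct (Bot x Hx) as [bb Hb]. rewrite Hb. reflexivity.
    + intros k Hk. assert (Q := A1 k ltac:(lia)). unfold SB in Q. rewrite HJ in Q.
      destruct (Bot (x0 - 1 - Z.of_nat k) ltac:(lia)) as [bb Hb]. rewrite Hb in *. destruct bb; simpl in *; congruence.
    + rewrite <- A2. unfold wsum. apply sum_nat_ext. intro k. unfold SB. rewrite HJ.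
      destruct (Bot (x0 - 1 - Z.of_nat k) ltac:(lia)) as [bb Hb]. rewrite Hb. reflexivity.
Qed.
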